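(* Let $\tau\colon X\to B$ be a fibre bundle of simplicial sets whose base $B$ and whose fibre $F$ are partial groups (that is, reduced $N$-simplicial sets with inversion). Then the total space $X$ is again a partial group, i.e. a reduced $N$-simplicial set with inversion. In other words, the category of partial groups is closed under extensions (fibre bundles).
   Context: A simplicial set $X$ is reduced if $X_0$ is a single point $v$; its unit is $1_X=s_0(v)\in X_1$. The enumerating operator $E_n\colon X_n\to X_1\times\cdots\times X_1$ ($n$ factors) sends an $n$-simplex $\sigma\colon\Delta[n]\to X$ to the tuple of its edges $(\sigma|_{\{0,1\}},\sigma|_{\{1,2\}},\dots,\sigma|_{\{n-1,n\}})$. $X$ is an $N$-simplicial set if $E_n$ is injective for all $n\ge1$; a simplex with edges $x_1,\dots,x_n$ is then written $[x_1|\dots|x_n]$. The product operator $\Pi\colon X_n\to X_1$ sends $\sigma$ to its edge from vertex $0$ to vertex $n$. The opposite simplicial set $X^{op}$ has $X^{op}_n=X_n$, $d_i^{op}=d_{n-i}$, $s_i^{op}=s_{n-i}$. An inversion on a reduced $N$-simplicial set $X$ is a simplicial map $\nu\colon X\to X^{op}$ with $\nu\circ\nu=\mathrm{Id}$ such that for every $x\in X_n$ ($n\ge1$) the tuple $[\nu(x)|x]$ is a $2n$-simplex of $X$ with $\Pi([\nu(x)|x])=1_X$. A partial group is (identified with) a reduced $N$-simplicial set with inversion. A simplicial map $\tau\colon X\to B$ is a fibre bundle with fibre $F$ if $\tau$ is onto and for every simplex $b\colon\Delta[n]\to B$ there is an isomorphism $F\times\Delta[n]\cong X^b$ over $\Delta[n]$,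 where $X^b=\Delta[n]\times_B X$ is the pullback. *)

(* Defs.v *)
(* Simplicial sets are presented as contravariant functors on
   the simplex category Delta, whose arrows [m] -> [n] are the monotone maps
   'I_m.+1 -> 'I_n.+1. *)
From mathcomp Require Import all_boot.
Set Implicit Arguments. Unset Strict Implicit. Unset Printing Implicit Defensive.

Definition monob m n (f : {ffun 'I_m.+1 -> 'I_n.+1}) : bool :=
  [forall i : 'I_m.+1, forall j : 'I_m.+1, (i <= j) ==> (f i <= f j)].

Definition hom m n := {f : {ffun 'I_m.+1 -> 'I_n.+1} | monob f}.

Definition hfun m n (f : hom m n) : 'I_m.+1 -> 'I_n.+1 := fun i => sval f i.

Lemma monobP m n (f : {ffun 'I_m.+1 -> 'I_n.+1}) :
  (forall i j : 'I_m.+1, i <= j -> f i <= f j) -> monob f.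
Proof.
move=> H; apply/forallP=> i; apply/forallP=> j; apply/implyP; exact: H.
Qed.

Lemma hfun_mono m n (f : hom m n) (i j : 'I_m.+1) : i <= j -> hfun f i <= hfun f j.
Proof.
case: f => g /= Hg Hij; rewrite /hfun /=.
by move/forallP: Hg => /(_ i) /forallP /(_ j) /implyP; apply.
Qed.

Lemma idh_mono n : monob [ffun i : 'I_n.+1 => i].
Proof. by apply: monobP => i j; rewrite !ffunE. Qed.
Definition idh n : hom n n := exist (@monob _ _) _ (idh_mono n).

Lemma comph_mono m n p (g : hom n p) (f : hom m n) :
  monob [ffun i : 'I_m.+1 => hfun g (hfun f i)].
Proof. by apply: monobP => i j Hij; rewrite !ffunE; do 2 apply: hfun_mono. Qed.
Definition comph m n p (g : hom n p) (f : hom m n) : hom m p :=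
  exist (@monob _ _) _ (comph_mono g f).

Lemma revh_mono m n (f : hom m n) :
  monob [ffun i : 'I_m.+1 => rev_ord (hfun f (rev_ord i))].
Proof.
apply: monobP => i j Hij; rewrite !ffunE /=.
have H : rev_ord j <= rev_ord i by rewrite /= leq_sub2l // ltnS.
by rewrite leq_sub2l // ltnS; apply: hfun_mono.
Qed.
Definition revh m n (f : hom m n) : hom m n := exist (@monob _ _) _ (revh_mono f).

Lemma edgeh_mono n (i : 'I_n) : monob [ffun j : 'I_2 => (inord (i + j) : 'I_n.+1)].
Proof.
apply: monobP => j k Hjk; rewrite !ffunE !inordK ?leq_add2l //.
- by rewrite ltnS; case: k {Hjk} => [[|[|]]] //= _; rewrite ?addn0 ?addn1 // ltnW.
- by rewrite ltnS; case: j {Hjk} => [[|[|]]] //= _; rewrite ?addn0 ?addn1 // ltnW.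
Qed.
Definition edgeh n (i : 'I_n) : hom 1 n := exist (@monob _ _) _ (edgeh_mono i).

Lemma longh_mono n : monob [ffun j : 'I_2 => (inord (j * n) : 'I_n.+1)].
Proof.
have Hle (j : 'I_2) : j * n <= n.
  by case: j => [[|[|]]] //= _; rewrite ?mul0n ?mul1n.
apply: monobP => j k Hjk; rewrite !ffunE !inordK ?ltnS ?Hle ?leq_mul2r ?Hjk ?orbT //.
Qed.
Definition longh n : hom 1 n := exist (@monob _ _) _ (longh_mono n).

Lemma degh_mono : monob [ffun j : 'I_2 => (ord0 : 'I_1)].
Proof. by apply: monobP => j k _; rewrite !ffunE. Qed.
Definition degh : hom 1 0 := exist (@monob _ _) _ degh_mono.

Record sSet := SSet {
  sobj :> nat -> Type;
  sact : forall m n, hom m n -> sobj n -> sobj m;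
  sact_id : forall n (x : sobj n), sact (idh n) x = x;
  sact_comp : forall m n p (g : hom n p) (f : hom m n) (x : sobj p),
      sact f (sact g x) = sact (comph g f) x
}.

Definition is_smap (X Y : sSet) (g : forall n, X n -> Y n) : Prop :=
  forall m n (f : hom m n) (x : X n), g m (@sact X _ _ f x) = @sact Y _ _ f (g n x).

(* simplicial maps X -> Y^op; the opposite simplicial set Y^op has the same
   simplices and acts by f |-> revh f (so d_i^op = d_(n-i), s_i^op = s_(n-i)) *)
Definition is_smap_op (X Y : sSet) (g : forall n, X n -> Y n) : Prop :=
  forall m n (f : hom m n) (x : X n), g m (@sact X _ _ f x) = @sact Y _ _ (revh f) (g n x).

Definition reduced (X : sSet) : Prop := exists v : X 0, forall w : X 0, w = v.

Definition is_unit (X : sSet) (u : X 1) : Prop :=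
  exists v : X 0, (forall w : X 0, w = v) /\ u = @sact X _ _ degh v.

Definition enum_op (X : sSet) n (x : X n) : 'I_n -> X 1 :=
  fun i => @sact X _ _ (edgeh i) x.

Definition prod_op (X : sSet) n (x : X n) : X 1 := @sact X _ _ (longh n) x.

Definition N_simplicial (X : sSet) : Prop :=
  forall n, 0 < n -> forall x y : X n,
    (forall i : 'I_n, enum_op x i = enum_op y i) -> x = y.

(* the 2n-simplex [nu(x) | x]: its edge tuple is the concatenation *)
Definition concat_edges (X : sSet) n (a b : 'I_n -> X 1) (i : 'I_(n + n)) : X 1 :=
  match split i with inl j => a j | inr j => b j end.

Definition is_inversion (X : sSet) (nu : forall n, X n -> X n) : Prop :=
  [/\ is_smap_op nu,
      (forall n (x : X n), nu n (nu n x) = x) &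
      (forall n, 0 < n -> forall x : X n, exists w : X (n + n),
          (forall i, enum_op w i = concat_edges (enum_op (nu n x)) (enum_op x) i)
          /\ is_unit (prod_op w))].

Definition partial_group (X : sSet) : Prop :=
  [/\ reduced X, N_simplicial X & exists nu : forall n, X n -> X n, is_inversion nu].

(* Delta[n]_m = hom m n, acting by precomposition.  The pullback
   X^b = Delta[n] x_B X has m-simplices the pairs (f, x) with f : hom m n,
   x : X m, and @sact B _ _ f b = tau m x.  An isomorphism F x Delta[n] ~= X^b over
   Delta[n] is (unfolded) a family phi_m : F_m * Delta[n]_m -> X_m such that
   (y, f) |-> (f, phi_m (y, f)) lands in X^b, is natural in m, and is bijective
   onto (X^b)_m; being over Delta[n] means the Delta[n]-component is kept. *)
Definition trivialization (X B F : sSet) (tau : forall n, X n -> B n) n (b : B n)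
  (phi : forall m, F m -> hom m n -> X m) : Prop :=
  [/\ (forall m (y : F m) (f : hom m n), tau m (phi m y f) = @sact B _ _ f b),
      (forall k m (g : hom k m) (y : F m) (f : hom m n),
          phi k (@sact F _ _ g y) (comph f g) = @sact X _ _ g (phi m y f)) &
      (forall m (f : hom m n) (x : X m), tau m x = @sact B _ _ f b ->
          exists! y : F m, phi m y f = x)].

Definition fibre_bundle (X B F : sSet) (tau : forall n, X n -> B n) : Prop :=
  [/\ is_smap tau,
      (forall n (b : B n), exists x : X n, tau n x = b) &
      (forall n (b : B n), exists phi : forall m, F m -> hom m n -> X m, trivialization tau b phi)].

(* Main.v *)
Require Import Defs.
From mathcomp Require Import all_boot zify.
From Stdlib Require Import ClassicalEpsilon.
Set Implicit Arguments. Unset Strict Implicit. Unset Printing Implicit Defensive.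

Definition okf m n (g : nat -> nat) :=
  (forall i j, i <= j -> j <= m -> g i <= g j) /\ g m <= n.

Lemma h0_mono m n : monob [ffun _ : 'I_m.+1 => (ord0 : 'I_n.+1)].
Proof. by apply: monobP => i j _; rewrite !ffunE. Qed.
Definition h0 m n : hom m n := exist (@monob _ _) _ (h0_mono m n).

Definition mkh m n (g : nat -> nat) : hom m n :=
  insubd (h0 m n) [ffun i : 'I_m.+1 => (inord (g i) : 'I_n.+1)].

Lemma mkh_ok m n g : okf m n g -> monob [ffun i : 'I_m.+1 => (inord (g i) : 'I_n.+1)].
Proof.
move=> [Hm Hb]; apply: monobP => i j Hij; rewrite !ffunE !inordK //.
- by apply: Hm => //; rewrite -ltnS.
- apply: leq_ltn_trans (Hm j m _ _) _ => //; by rewrite -ltnS.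
- apply: leq_ltn_trans (Hm i m _ _) _ => //; by rewrite -ltnS.
Qed.

Lemma mkhE m n g (i : 'I_m.+1) : okf m n g -> (hfun (mkh m n g) i : nat) = g i.
Proof.
move=> Hok; rewrite /hfun /mkh val_insubd mkh_ok // ffunE inordK //.
case: Hok => Hm Hb; apply: leq_ltn_trans (Hm i m _ _) _ => //; by rewrite -ltnS.
Qed.

Lemma homP m n (f f' : hom m n) :
  (forall i : 'I_m.+1, (hfun f i : nat) = hfun f' i) -> f = f'.
Proof.
move=> H; apply: val_inj; apply/ffunP => i; apply: val_inj; exact: H.
Qed.

Lemma okf_comp m k n f g : okf m k f -> okf k n g -> okf m n (fun i => g (f i)).
Proof.
move=> [Hf1 Hf2] [Hg1 Hg2]; split.
- move=> i j Hij Hj; apply: Hg1; [exact: Hf1 | exact: leq_trans (Hf1 j m Hj (leqnn _)) Hf2].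
- apply: leq_trans (Hg1 _ _ Hf2 (leqnn _)) Hg2.
Qed.

Lemma okf_le m n g i : okf m n g -> i <= m -> g i <= n.
Proof. by move=> [H1 H2] Hi; apply: leq_trans (H1 i m Hi (leqnn _)) H2. Qed.

Lemma comph_mkh m k n f g : okf m k f -> okf k n g ->
  comph (mkh k n g) (mkh m k f) = mkh m n (fun i => g (f i)).
Proof.
move=> Hf Hg; apply: homP => i; rewrite /comph /hfun /= ffunE.
have := mkhE i (okf_comp Hf Hg); rewrite /hfun => ->.
have Hfi : f i <= k by apply: okf_le Hf _; rewrite -ltnS.
have := mkhE i Hf; rewrite /hfun => E.
have -> : sval (mkh m k f) i = Ordinal (n:=k.+1) (m:=f i) Hfi by apply: val_inj.
by have := mkhE (Ordinal (n:=k.+1) (m:=f i) Hfi) Hg; rewrite /hfun.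
Qed.

Section FC.
Variable S : sSet.

Definition fc m n (g : nat -> nat) (x : S n) : S m := @sact S m n (mkh m n g) x.
Definition e2 n p q (x : S n) : S 1 := fc 1 (fun j => if j is 0 then p else q) x.

Lemma fc_fc m k n f g (x : S n) : okf m k f -> okf k n g ->
  fc m f (fc k g x) = fc m (fun i => g (f i)) x.
Proof. by move=> Hf Hg; rewrite /fc sact_comp comph_mkh. Qed.

Lemma fc_ext m n f f' (x : S n) : okf m n f -> (forall i, i <= m -> f i = f' i) ->
  fc m f x = fc m f' x.
Proof.
move=> Hok E; have Hok' : okf m n f'.
  case: Hok => H1 H2; split; last by rewrite -E.
  by move=> i j Hij Hj; rewrite -!E //; [exact: H1 | exact: leq_trans Hj].
rewrite /fc; congr sact; apply: homP => i; rewrite !mkhE // E //; by rewrite -ltnS.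
Qed.

Lemma fc_id n (x : S n) : fc n (fun i => i) x = x.
Proof.
rewrite /fc -[in RHS](sact_id x); congr sact; apply: homP => i.
by rewrite mkhE //= /hfun /= ffunE.
Qed.

Lemma okf2 n p q : p <= q -> q <= n -> okf 1 n (fun j => if j is 0 then p else q).
Proof. move=> Hpq Hq; split => // [[|i]] [|j] //=. Qed.

Lemma e2_fc k n g p q (x : S n) : okf k n g -> p <= q -> q <= k ->
  e2 p q (fc k g x) = e2 (g p) (g q) x.
Proof.
move=> Hg Hpq Hq; rewrite /e2 fc_fc //; last exact: okf2.
apply: fc_ext => [|[|i]] //.
by apply: (okf_comp (okf2 Hpq Hq) Hg).
Qed.

End FC.

Lemma okf_id n : okf n n (fun i => i).
Proof. by split. Qed.

Lemma okf_const m n p : p <= n -> okf m n (fun _ => p).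
Proof. by split. Qed.

Lemma idh_mkh n : idh n = mkh n n (fun i => i).
Proof. apply: homP => i; by rewrite mkhE ?okf_id // /hfun /= ffunE. Qed.

Lemma degh_mkh : degh = mkh 1 0 (fun _ => 0).
Proof. apply: homP => i; rewrite mkhE ?okf_const //. by rewrite /hfun /= ffunE. Qed.

Lemma edgeh_mkh n (i : 'I_n) : edgeh i = mkh 1 n (fun j => if j is 0 then i else i.+1).
Proof.
have Hi := ltn_ord i.
apply: homP => j; rewrite mkhE; last by apply: okf2 => //; apply: ltnW.
rewrite /hfun /= ffunE inordK; case: j => [[|[|]]] //= _; rewrite ?addn0 ?addn1 //; lia.
Qed.

Lemma longh_mkh n : longh n = mkh 1 n (fun j => if j is 0 then 0 else n).
Proof.
apply: homP => j; rewrite mkhE; last exact: okf2.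
rewrite /hfun /= ffunE inordK; case: j => [[|[|]]] //= _; rewrite ?mul0n ?mul1n //.
Qed.

Lemma revh_mkh m n g : okf m n g ->
  revh (mkh m n g) = mkh m n (fun i => n - g (m - i)).
Proof.
move=> Hg; have Hok : okf m n (fun i => n - g (m - i)).
  case: Hg => H1 H2; split; last lia.
  move=> i j Hij Hj; have := H1 (m - j) (m - i); lia.
apply: homP => i; rewrite mkhE // /hfun /= ffunE /=.
have := mkhE (rev_ord i) Hg; rewrite /hfun => ->; done.
Qed.

Section S.
Variable S : sSet.

Lemma enum_opE n (x : S n) (i : 'I_n) : enum_op x i = e2 i i.+1 x.
Proof. by rewrite /enum_op edgeh_mkh. Qed.

Lemma prod_opE n (x : S n) : prod_op x = e2 0 n x.
Proof. by rewrite /prod_op longh_mkh. Qed.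

Lemma NS_e2 : N_simplicial S -> forall n (x y : S n), 0 < n ->
  (forall i, i < n -> e2 i i.+1 x = e2 i i.+1 y) -> x = y.
Proof.
move=> HN n x y Hn H; apply: HN => // i; rewrite !enum_opE; apply: H; exact: ltn_ord.
Qed.

Definition unitS (v : S 0) : S 1 := @sact S 1 0 degh v.

Lemma e2_pp (v : S 0) (Hv : forall w : S 0, w = v) n p (x : S n) : p <= n ->
  e2 p p x = unitS v.
Proof.
move=> Hp; rewrite /e2 (@fc_ext _ 1 n _ (fun _ => p)) //; last first.
  by move=> [|]. by apply: okf2.
rewrite -(@fc_fc _ 1 0 n (fun _ => 0) (fun _ => p)) ?okf_const //.
by rewrite /unitS degh_mkh (Hv (fc 0 _ x)).
Qed.

End S.

Lemma smap_fc (X Y : sSet) (g : forall n, X n -> Y n) : is_smap g ->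
  forall m n h (x : X n), g m (fc m h x) = fc m h (g n x).
Proof. by move=> H m n h x; rewrite /fc H. Qed.

Lemma smapop_fc (X Y : sSet) (g : forall n, X n -> Y n) : is_smap_op g ->
  forall m n h (x : X n), okf m n h -> g m (fc m h x) = fc m (fun i => n - h (m - i)) (g n x).
Proof. by move=> H m n h x Hh; rewrite /fc H revh_mkh. Qed.

Definition pt3 (p q r : nat) : nat -> nat := fun j => match j with 0 => p | 1 => q | _ => r end.

Lemma okf3 n p q r : p <= q -> q <= r -> r <= n -> okf 2 n (pt3 p q r).
Proof.
move=> H1 H2 H3; split => // [[|[|i]]] [|[|[|j]]] //= _ _; lia.
Qed.

Lemma e2_fcE (S : sSet) k n g p q p' q' (x : S n) : okf k n g -> p <= q -> q <= k ->
  g p = p' -> g q = q' -> e2 p q (fc k g x) = e2 p' q' x.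
Proof. by move=> Hg Hpq Hq <- <-; apply: e2_fc. Qed.

Ltac okt := split; [ let i := fresh "i" in let j := fresh "j" in move=> i j ? ?; lia | lia ].

Lemma e2_id (S : sSet) k N (w : S N) p q : p <= q -> q <= k -> k <= N ->
  e2 p q (fc k (fun i => i) w) = e2 p q w.
Proof. move=> *; apply: e2_fc => //; okt. Qed.

Lemma e2_sh (S : sSet) k N (w : S N) s p q : p <= q -> q <= k -> s + k <= N ->
  e2 p q (fc k (fun i => s + i) w) = e2 (s + p) (s + q) w.
Proof. move=> *; apply: e2_fc => //; okt. Qed.

Lemma e2_eq (S : sSet) n (x : S n) p q p' q' : p = p' -> q = q' -> e2 p q x = e2 p' q' x.
Proof. by move=> -> ->. Qed.

Lemma e2_01 (S : sSet) (x : S 1) : e2 0 1 x = x.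
Proof. rewrite /e2 -[RHS](fc_id x); apply: fc_ext; first by apply: okf2. by move=> [|[|]]. Qed.

Lemma e2_pt3 (S : sSet) N (x : S N) p q r a b : p <= q -> q <= r -> r <= N -> a <= b -> b <= 2 ->
  e2 a b (fc 2 (pt3 p q r) x) = e2 (pt3 p q r a) (pt3 p q r b) x.
Proof. by move=> *; apply: e2_fc => //; apply: okf3. Qed.

Lemma mkh_ext m n f f' : okf m n f -> (forall i, i <= m -> f i = f' i) -> mkh m n f = mkh m n f'.
Proof.
move=> Hok E; have Hok' : okf m n f'.
  case: Hok => H1 H2; split; last by rewrite -E.
  by move=> i j Hij Hj; rewrite -!E //; [exact: H1 | exact: leq_trans Hj].
apply: homP => i; rewrite !mkhE // E //; by rewrite -ltnS.
Qed.

Definition pt2 (p q : nat) : nat -> nat := fun j => if j is 0 then p else q.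

Lemma e2E (S : sSet) n p q (x : S n) : e2 p q x = @sact S 1 n (mkh 1 n (pt2 p q)) x.
Proof. by []. Qed.

Lemma hom_mkh m n (f : hom m n) : okf m n (fun i => hfun f (inord i)) /\
  f = mkh m n (fun i => hfun f (inord i)).
Proof.
have Hok : okf m n (fun i => hfun f (inord i)).
  split.
  - move=> i j Hij Hj; apply: hfun_mono; rewrite !inordK //; lia.
  - by have := ltn_ord (hfun f (inord m)); rewrite ltnS.
split => //; apply: homP => i; rewrite mkhE // inord_val //.
Qed.

Lemma fc_fcE (S : sSet) m k n f g h (x : S n) : okf m k f -> okf k n g ->
  (forall i, i <= m -> g (f i) = h i) -> fc m f (fc k g x) = fc m h x.
Proof. by move=> Hf Hg E; rewrite fc_fc //; apply: fc_ext => //; apply: okf_comp Hf Hg. Qed.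

Definition pt4 (p q r s : nat) : nat -> nat :=
  fun j => match j with 0 => p | 1 => q | 2 => r | _ => s end.

Lemma okf4 n p q r s : p <= q -> q <= r -> r <= s -> s <= n -> okf 3 n (pt4 p q r s).
Proof.
move=> H1 H2 H3 H4; split => // [[|[|[|i]]]] [|[|[|[|j]]]] //= _ _; lia.
Qed.

Lemma e2_pt4 (S : sSet) N (x : S N) p q r s a b : p <= q -> q <= r -> r <= s -> s <= N ->
  a <= b -> b <= 3 ->
  e2 a b (fc 3 (pt4 p q r s) x) = e2 (pt4 p q r s a) (pt4 p q r s b) x.
Proof. by move=> *; apply: e2_fc => //; apply: okf4. Qed.

Ltac mcase := repeat match goal with
  |- context [match ?t with 0 => _ | _.+1 => _ end] =>
     let E := fresh "E" in case E: t => [|?] end.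

Lemma okf_rev m n g : okf m n g -> okf m n (fun i => n - g (m - i)).
Proof.
case=> H1 H2; split; last lia.
move=> i j Hij Hj; have := H1 (m - j) (m - i); lia.
Qed.

Section PG.
Variables (P : sSet) (v : P 0) (Hv : forall w : P 0, w = v) (HN : N_simplicial P)
  (nu : forall n, P n -> P n) (Hnu : is_inversion nu).

Notation u := (unitS v).

Definition Good n (a x : P n) (w : P (n + n)) :=
  [/\ fc n (fun i => i) w = a, fc n (fun i => n + i) w = x &
      forall k, k <= n -> e2 (n - k) (n + k) w = u].

Lemma nu_e2 n p q (x : P n) : p <= q -> q <= n -> e2 p q (nu x) = nu (e2 (n-q) (n-p) x).
Proof.
move=> Hpq Hq; case: Hnu => Hs _ _.
rewrite /e2 smapop_fc //; last by apply: okf2; lia.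
apply: fc_ext; first by apply: okf2.
by move=> [|[|]] //= _; lia.
Qed.

Lemma nu_invol n (x : P n) : nu (nu x) = x.
Proof. by case: Hnu. Qed.

Lemma nu_unit : nu u = u.
Proof.
case: Hnu => Hs _ _; rewrite /unitS Hs (Hv (nu v)); congr sact.
by apply: homP => i; rewrite /hfun /= !ffunE.
Qed.

Lemma wit0 n (x : P n) : 0 < n -> exists w : P (n + n),
  [/\ fc n (fun i => i) w = nu x, fc n (fun i => n + i) w = x & e2 0 (n + n) w = u].
Proof.
move=> Hn; case: Hnu => _ _ /(_ n Hn x) [w [He [v' [Hv' Hu]]]].
have Ev : v' = v by apply: Hv.
exists w; split.
- apply: NS_e2 => // i Hi; rewrite e2_fc //; last by okt.
  have Hi2 : i < n + n by lia.
  have := He (Ordinal Hi2); rewrite !enum_opE /= => ->.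
  rewrite /concat_edges; case: splitP => j /= Hj; last by lia.
  by rewrite enum_opE Hj.
- apply: NS_e2 => // i Hi; rewrite e2_fc //; last by okt.
  have Hi2 : n + i < n + n by lia.
  have := He (Ordinal Hi2); rewrite !enum_opE /= addnS => ->.
  rewrite /concat_edges; case: splitP => j /= Hj; first by have := ltn_ord j; lia.
  have -> : i = j by lia. by rewrite enum_opE.
- by rewrite -prod_opE Hu Ev.
Qed.

Lemma wit n (x : P n) : exists w : P (n + n), Good (nu x) x w.
Proof.
case: n x => [|n] x.
  exists x; split; rewrite ?(Hv (nu _)) ?(Hv x) ?(Hv (fc _ _ _)) //.
  move=> k Hk; have -> : k = 0 by lia.
  exact: (e2_pp Hv _ (leqnn 0)).
have [w [H1 H2 H3]] := wit0 x (ltn0Sn n); exists w; split => // k Hk.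
case: k Hk => [|k] Hk; first by rewrite subn0 addn0 (e2_pp Hv) //; lia.
pose xk := fc k.+1 (fun i => i) x.
have [wk [Hk1 Hk2 Hk3]] := wit0 xk (ltn0Sn k).
have E : fc (k.+1 + k.+1) (fun i => n.+1 - k.+1 + i) w = wk.
  apply: NS_e2 => //.
  move=> i Hi; rewrite e2_fc //; last by okt.
  case: (ltnP i k.+1) => HiK.
  - have L : e2 i i.+1 wk = nu (e2 (k - i) (k.+1 - i) x).
      rewrite -(@e2_id _ k.+1 _ wk i i.+1) ?Hk1; try lia.
      rewrite nu_e2; try lia.
      rewrite /xk e2_id; try lia.
      apply: (congr1 (@nu 1)); apply: e2_eq; lia.
    rewrite L; transitivity (e2 (n.+1 - k.+1 + i) (n.+1 - k.+1 + i.+1) (nu x)).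
      rewrite -H1 e2_id //; lia.
    rewrite nu_e2; try lia.
    apply: (congr1 (@nu 1)); apply: e2_eq; lia.
  - have L : e2 i i.+1 wk = e2 (i - k.+1) (i - k.+1).+1 x.
      transitivity (e2 (k.+1 + (i - k.+1)) (k.+1 + (i - k.+1).+1) wk).
        by apply: e2_eq; lia.
      rewrite -(@e2_sh _ k.+1 _ wk k.+1) ?Hk2; try lia.
      rewrite /xk e2_id; try lia.
      apply: e2_eq; lia.
    rewrite L -H2 e2_sh; try lia.
    apply: e2_eq; lia.
rewrite -(@e2_fcE _ (k.+1 + k.+1) _ (fun i => n.+1 - k.+1 + i) 0 (k.+1 + k.+1)); [|okt|lia|lia|lia|lia].
by rewrite E.
Qed.

Lemma deg2a (F : P 2) : e2 1 2 F = u -> e2 0 2 F = e2 0 1 F.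
Proof.
move=> H; have E : F = fc 2 (pt3 0 1 1) F.
  apply: NS_e2 => // [[|[|]]] // _; rewrite e2_pt3 //=.
  by rewrite H (e2_pp Hv).
by rewrite {1}E e2_pt3.
Qed.

Lemma deg2b (F : P 2) : e2 0 1 F = u -> e2 0 2 F = e2 1 2 F.
Proof.
move=> H; have E : F = fc 2 (pt3 1 1 2) F.
  apply: NS_e2 => // [[|[|]]] // _; rewrite e2_pt3 //=.
  by rewrite H (e2_pp Hv).
by rewrite {1}E e2_pt3.
Qed.

Lemma RC_key (s : P 2) : exists F2 : P 2,
  [/\ e2 0 1 F2 = e2 0 2 s, e2 1 2 F2 = nu (e2 1 2 s) & e2 0 2 F2 = e2 0 1 s].
Proof.
have [T [H1 H2 H3]] := wit (nu s); rewrite nu_invol in H1.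
exists (fc 2 (pt3 0 2 3) T); split.
- rewrite e2_pt3 //=. rewrite -H1. by rewrite e2_id.
- rewrite e2_pt3 //=. transitivity (e2 0 1 (nu s)); last by rewrite nu_e2.
  rewrite -H2. by rewrite e2_sh.
- rewrite e2_pt3 //=.
  have -> : e2 0 3 T = e2 0 2 (fc 2 (pt3 0 1 3) T) by rewrite e2_pt3.
  rewrite deg2a; last by rewrite e2_pt3 //= (H3 1).
  rewrite e2_pt3 //=. rewrite -H1. by rewrite e2_id.
Qed.

Lemma RC2 (s s' : P 2) : e2 1 2 s = e2 1 2 s' -> e2 0 2 s = e2 0 2 s' -> e2 0 1 s = e2 0 1 s'.
Proof.
move=> E1 E2; have [F [F1 F2 F3]] := RC_key s; have [F' [F1' F2' F3']] := RC_key s'.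
have : F = F' by apply: NS_e2 => // [[|[|]]] // _; rewrite ?F1 ?F1' ?F2 ?F2' ?E1 ?E2.
by move=> EF; rewrite -F3 -F3' EF.
Qed.

Lemma RC N (z z' : P N) p q r : p <= q -> q <= r -> r <= N ->
  e2 q r z = e2 q r z' -> e2 p r z = e2 p r z' -> e2 p q z = e2 p q z'.
Proof.
move=> Hpq Hqr HrN E1 E2.
have := @RC2 (fc 2 (pt3 p q r) z) (fc 2 (pt3 p q r) z').
rewrite !e2_pt3 //=; apply => //.
Qed.
Lemma TU n (z z' : P (n + n)) : fc n (fun i => n + i) z = fc n (fun i => n + i) z' ->
  (forall k, k <= n -> e2 (n - k) (n + k) z = e2 (n - k) (n + k) z') -> z = z'.
Proof.
case: n z z' => [|n] z z' Hb Hn; first by rewrite (Hv z) (Hv z').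
have Eb : forall i, n.+1 <= i -> i < n.+1 + n.+1 -> e2 i i.+1 z = e2 i i.+1 z'.
  move=> i H1 H2.
  transitivity (e2 (n.+1 + (i - n.+1)) (n.+1 + (i - n.+1).+1) z); first by apply: e2_eq; lia.
  rewrite -(@e2_sh _ n.+1 _ z n.+1) ?Hb; try lia.
  rewrite e2_sh; try lia. by apply: e2_eq; lia.
apply: NS_e2 => // i Hi.
case: (leqP n.+1 i) => Hi2; first exact: Eb.
set k := n.+1 - i.
have E : e2 (n.+1 - k) (n.+1 + k).-1 z = e2 (n.+1 - k) (n.+1 + k).-1 z'.
  apply: (@RC _ _ _ _ _ (n.+1 + k)); try lia.
  - have := Eb (n.+1 + k).-1; rewrite prednK; last by lia. apply; lia.
  - by apply: Hn; lia.
have := @RC _ z z' (n.+1 - k) (n.+1 - k).+1 (n.+1 + k).-1.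
have -> : n.+1 - k = i by rewrite /k; lia.
apply; try lia.
- have := Hn (k.-1); have -> : n.+1 - k.-1 = i.+1 by rewrite /k; lia.
  have -> : n.+1 + k.-1 = (n.+1 + k).-1 by rewrite /k; lia.
  apply; rewrite /k; lia.
- by have -> : i = n.+1 - k by rewrite /k; lia.
Qed.

Lemma R3 (c : P 1) : exists R : P 3, [/\ e2 1 2 R = c, e2 0 2 R = u & e2 1 3 R = u].
Proof.
have [W [W1 W2 W3]] := wit c.
have [W' [W'1 W'2 W'3]] := wit W.
exists (fc 3 (fun i => i) W'); split.
- rewrite e2_id // -(@e2_id _ 2 _ W') // W'1 nu_e2 //=.
  by rewrite -(@e2_id _ 1 _ W) // W1 e2_01 nu_invol.
- rewrite e2_id // -(@e2_id _ 2 _ W') // W'1 nu_e2 //=.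
  by rewrite (W3 1) // nu_unit.
- by rewrite e2_id // (W'3 1).
Qed.

End PG.

Lemma Good1_intro (S : sSet) (v : S 0) (Hv : forall w, w = v) (a x : S 1) (w : S 2) :
  e2 0 1 w = a -> e2 1 2 w = x -> e2 0 2 w = unitS v -> Good v a x w.
Proof.
move=> H1 H2 H3; split.
- rewrite -H1 /e2; apply: fc_ext; first by okt. by move=> [|[|]].
- rewrite -H2 /e2; apply: fc_ext; first by okt. by move=> [|[|]].
- by move=> [|[|k]] //= _; rewrite (e2_pp Hv).
Qed.

Lemma Good_e2 (S : sSet) (v : S 0) n (a x : S n) (w : S (n + n)) p q :
  Good v a x w -> p <= q -> q <= n -> e2 p q a = e2 p q w /\ e2 p q x = e2 (n + p) (n + q) w.
Proof.
move=> [H1 H2 H3] Hpq Hq; split; first by rewrite -H1 e2_id //; lia.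
by rewrite -H2 e2_sh //; lia.
Qed.

Section Triv.
Unset Implicit Arguments.
Variables (X B F : sSet) (tau : forall n, X n -> B n) (Htau : is_smap tau).
Variables (vX : X 0) (HvX : forall w, w = vX) (vB : B 0) (HvB : forall w, w = vB)
  (vF : F 0) (HvF : forall w, w = vF) (HNB : N_simplicial B).
Variables (N : nat) (b : B N) (phi : forall m, F m -> hom m N -> X m)
  (Hphi : trivialization tau b phi).
Set Implicit Arguments.

Lemma phi_tau m (y : F m) (f : hom m N) : tau m (phi m y f) = sact f b.
Proof. by case: Hphi. Qed.

Lemma phi_uniq m (y y' : F m) (f : hom m N) : phi m y f = phi m y' f -> y = y'.
Proof.
move=> E; case: Hphi => _ _ /(_ m f (phi m y f) (phi_tau y f)) [z [_ Hz]].
by rewrite -(Hz y) // (Hz y').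
Qed.

Lemma phi_surj m (f : hom m N) (x : X m) : tau m x = sact f b -> exists y, phi m y f = x.
Proof. by case: Hphi => _ _ /(_ m f x) H /H [y [Hy _]]; exists y. Qed.

Lemma phi_nat k m g f (y : F m) : okf k m g -> okf m N f ->
  phi k (fc k g y) (mkh k N (fun i => f (g i))) = fc k g (phi m y (mkh m N f)).
Proof.
move=> Hg Hf; case: Hphi => _ Hn _.
by rewrite /fc -Hn comph_mkh.
Qed.

Lemma phi_unit p : p <= N -> phi 1 (unitS vF) (mkh 1 N (pt2 p p)) = unitS vX.
Proof.
move=> Hp; rewrite /unitS degh_mkh.
rewrite (@mkh_ext 1 N (pt2 p p) (fun i => (fun _ : nat => p) ((fun _ : nat => 0) i))); last first.
  by move=> [|].
  by apply: okf2.
have := @phi_nat 1 0 (fun _ => 0) (fun _ => p) vF (okf_const _ (leqnn 0)) (okf_const _ Hp).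
rewrite /fc => ->; by rewrite (HvX (phi _ _ _)).
Qed.

Lemma tau_unit : tau 1 (unitS vX) = unitS vB.
Proof. by rewrite /unitS Htau (HvB (tau 0 vX)). Qed.

Lemma prepend p q c : p <= q -> q <= N -> e2 p q b = unitS vB ->
  phi 1 c (mkh 1 N (pt2 p q)) = unitS vX ->
  forall m (t : F m), exists Z : F m.+1, e2 0 1 Z = c /\ fc m (fun i => i.+1) Z = t.
Proof.
move=> Hpq HqN Hb Hc m t.
pose u0 := phi m t (mkh m N (fun _ => q)).
pose s := fc m.+1 (fun j => j.-1) u0.
have okp : okf m.+1 m (fun j => j.-1) by okt.
have okg : okf m.+1 N (pt2 p q) by split => // [[|i]] [|j] //=.
have Ht : tau m.+1 s = sact (mkh m.+1 N (pt2 p q)) b.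
  rewrite /s smap_fc // /u0 phi_tau -/(fc _ _ b) fc_fc //; try (apply: okf_const; lia).
  apply: NS_e2 => // i Hi; rewrite !e2_fc //; try (apply: okf_const; lia).
  case: i Hi => [|i] Hi /=; first by rewrite Hb (e2_pp HvB).
  by [].
have [Z HZ] := phi_surj Ht.
exists Z; split.
- apply: (@phi_uniq 1 _ _ (mkh 1 N (pt2 p q))); rewrite Hc.
  rewrite (@mkh_ext 1 N (pt2 p q) (fun i => pt2 p q (pt2 0 1 i))); last by move=> [|].
  + rewrite /e2 -/(pt2 0 1) phi_nat //; last exact: okf2.
    by rewrite HZ /s -/(e2 0 1 _) e2_fc //= (e2_pp HvX) //; apply: okf_le (okf_id _) _.
  + exact: okf2.
- apply: (@phi_uniq m _ _ (mkh m N (fun _ => q))).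
  rewrite {1}(@mkh_ext m N (fun _ => q) (fun i => pt2 p q i.+1)) //; try (apply: okf_const; lia).
  rewrite phi_nat //; try by okt.
  rewrite HZ /s fc_fc //; try by okt.
  by rewrite (@fc_ext _ m m _ (fun i => i)) ?fc_id //; okt.
Qed.

Lemma append p q d : p <= q -> q <= N -> e2 p q b = unitS vB ->
  phi 1 d (mkh 1 N (pt2 p q)) = unitS vX ->
  forall m (t : F m), exists Z : F m.+1, e2 m m.+1 Z = d /\ fc m (fun i => i) Z = t.
Proof.
move=> Hpq HqN Hb Hd m t.
pose u0 := phi m t (mkh m N (fun _ => p)).
pose s := fc m.+1 (fun j => minn j m) u0.
pose g := fun j => if j <= m then p else q.
have okp : okf m.+1 m (fun j => minn j m) by okt.
have okg : okf m.+1 N g.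
  split; last by rewrite /g ltnn.
  move=> i j Hij Hj; rewrite /g.
  case: (leqP i m) => Hi; case: (leqP j m) => Hj' //; lia.
have Ht : tau m.+1 s = sact (mkh m.+1 N g) b.
  rewrite /s smap_fc // /u0 phi_tau -/(fc _ _ b) fc_fc //; try (apply: okf_const; lia).
  apply: NS_e2 => // i Hi; rewrite !e2_fc //; try (apply: okf_const; lia).
  rewrite /g; case: (ltnP i m) => Him.
  - by rewrite (ltnW Him).
  - have -> : i = m by lia.
    by rewrite leqnn Hb (e2_pp HvB) //; lia.
have [Z HZ] := phi_surj Ht.
exists Z; split.
- apply: (@phi_uniq 1 _ _ (mkh 1 N (pt2 p q))); rewrite Hd.
  rewrite (@mkh_ext 1 N (pt2 p q) (fun i => g (pt2 m m.+1 i))); last first.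
    by move=> [|i] Hi //=; rewrite /g ?leqnn ?ltnn.
    by apply: okf2.
  rewrite /e2 -/(pt2 m m.+1) phi_nat //; last by apply: okf2.
  rewrite HZ /s -/(e2 m m.+1 _) e2_fc //=.
  have -> : minn m.+1 m = m by lia.
  by rewrite minnn (e2_pp HvX).
- apply: (@phi_uniq m _ _ (mkh m N (fun _ => p))).
  have E := @phi_nat m m.+1 (fun i => i) (fun i => g i) Z ltac:(okt) okg.
  rewrite {1}(@mkh_ext m N (fun _ => p) (fun i => g i)) //; last first.
    by move=> i Hi; rewrite /g Hi.
    by apply: okf_const; lia.
  rewrite E HZ /s fc_fc //; try by okt.
  by rewrite (@fc_ext _ m m _ (fun i => i)) ?fc_id //; [okt | move=> i Hi; lia].
Qed.

Lemma phi_nat_id k g (y : F N) : okf k N g ->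
  phi k (fc k g y) (mkh k N g) = fc k g (phi N y (mkh N N (fun i => i))).
Proof. by move=> Hg; rewrite -phi_nat //; exact: okf_id. Qed.

End Triv.

Section Main.
Unset Implicit Arguments.
Variables (X B F : sSet) (tau : forall n, X n -> B n) (Htau : is_smap tau)
  (Htriv : forall n (b : B n), exists phi : forall m, F m -> hom m n -> X m, trivialization tau b phi).
Variables (vB : B 0) (HvB : forall w, w = vB) (HNB : N_simplicial B)
  (nuB : forall n, B n -> B n) (HnuB : is_inversion nuB).
Variables (vF : F 0) (HvF : forall w, w = vF) (HNF : N_simplicial F)
  (nuF : forall n, F n -> F n) (HnuF : is_inversion nuF).
Set Implicit Arguments.

Lemma reducedX : exists v : X 0, forall w, w = v.
Proof.
have [phi Hphi] := Htriv 0 vB.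
exists (phi 0 vF (idh 0)) => x.
have [y Hy] : exists y, phi 0 y (idh 0) = x.
  apply: (phi_surj Hphi); by rewrite sact_id (HvB (tau 0 x)).
by rewrite -Hy (HvF y).
Qed.

Lemma NSX : N_simplicial X.
Proof.
move=> n Hn x y H.
have Eb : tau n y = tau n x.
  apply: HNB => // i; rewrite /enum_op -!Htau; congr tau; exact: (esym (H i)).
have [phi Hphi] := Htriv n (tau n x).
have [yx Hx] : exists z, phi n z (idh n) = x by apply: (phi_surj Hphi); rewrite sact_id.
have [yy Hy] : exists z, phi n z (idh n) = y by apply: (phi_surj Hphi); rewrite sact_id.
rewrite -Hx -Hy; congr phi; apply: HNF => // i.
apply: (phi_uniq Hphi (f := comph (idh n) (edgeh i))).
case: Hphi => _ Hn2 _; rewrite /enum_op !Hn2 Hx Hy; exact: H.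
Qed.

Variables (vX : X 0) (HvX : forall w, w = vX).

Notation uX := (unitS vX).
Notation uB := (unitS vB).
Notation uF := (unitS vF).

Definition g1 n k := fun i => match i with 0 => n - k.+1 | 1 => n - k | i'.+2 => k + n + i' end.
Definition g2 := fun i => match i with 0 => 0 | i'.+1 => i'.+3 end.

Lemma E_X n (x : X n) : exists a w, Good vX a x w.
Proof.
case: n x => [|n] x.
  exists x, x; split; rewrite ?(HvX (fc _ _ _)) ?(HvX x) //.
  move=> k Hk; have -> : k = 0 by lia. exact: (e2_pp HvX _ (leqnn 0)).
set N := n.+1.
set b := tau N x.
have [W [HW1 HW2 HW3]] := wit HvB HNB HnuB b.
have [phi Hphi] := Htriv (N + N) W.
have [y Hy] : exists y, phi N y (mkh N (N + N) (fun i => N + i)) = x.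
  by apply: (phi_surj Hphi); rewrite -/(fc _ _ W) HW2.
have P : forall k, k <= N -> exists s : F (k + N), fc N (fun i => k + i) s = y /\
   forall j, j <= k -> phi 1 (e2 (k - j) (k + j) s) (mkh 1 (N + N) (pt2 (N - j) (N + j))) = uX.
  elim => [|k IH] Hk.
  - exists y; split.
      by rewrite (@fc_ext _ N N _ (fun i => i)) ?fc_id //; okt.
    move=> j Hj; have -> : j = 0 by lia.
    rewrite !subn0 !addn0 (e2_pp HvF) //.
    by apply: (phi_unit HvX vF Hphi); lia.
  - have [s [Hs1 Hs2]] := IH (ltnW Hk).
    have [T [HT1 HT2 HT3]] := wit HvF HNF HnuF s.
    have okg1 : okf (k + N).+2 ((k + N) + (k + N)) (g1 N k).
      split => [i j Hij Hj|]; last by rewrite /=; lia.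
      case: i Hij => [|[|i]] Hij; case: j Hij Hj => [|[|j]] Hij Hj //=; lia.
    pose U1 := fc (k + N).+2 (g1 N k) T.
    have [c' Hc'] : exists c, phi 1 c (mkh 1 (N + N) (pt2 (N - k.+1) (N + k.+1))) = uX.
      by apply: (phi_surj Hphi); rewrite (tau_unit Htau vX HvB) -e2E HW3.
    have [Z [HZ1 HZ2]] := @prepend _ _ _ _ Htau _ HvX _ HvB HNB _ _ _ Hphi
      (N - k.+1) (N + k.+1) c' ltac:(lia) ltac:(lia) (HW3 _ Hk) Hc' _ U1.
    have okg2 : okf (k.+1 + N) (k + N).+3 g2.
      split => [i j Hij Hj|]; last by rewrite /g2 addSn.
      case: i Hij => [|i] Hij; case: j Hij Hj => [|j] Hij Hj //=; lia.
    pose s' := fc (k.+1 + N) g2 Z.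
    exists s'; split.
    + have A1 : fc N (fun i => k.+1 + i) s' = fc N (fun i => k.+2 + i) U1.
        rewrite /s' (@fc_fcE _ _ _ _ _ _ (fun i => (k.+2 + i).+1)); [|okt|done|].
          rewrite -HZ2 (@fc_fcE _ _ _ _ _ _ (fun i => (k.+2 + i).+1)) //; okt.
        by move=> i _; rewrite /g2 addSn /=; lia.
      have A2 : fc N (fun i => k.+2 + i) U1 = fc N (fun i => k + N + (k + i)) T.
        rewrite /U1 (@fc_fcE _ _ _ _ _ _ (fun i => k + N + (k + i))); [done|okt|done|].
        by move=> i _; rewrite /g1; mcase; lia.
      have A3 : y = fc N (fun i => k + N + (k + i)) T.
        rewrite -Hs1 -HT2 (@fc_fcE _ _ _ _ _ _ (fun i => k + N + (k + i))) //; okt.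
      by rewrite A1 A2 A3.
    + have Es : forall j, j <= k -> e2 (k.+1 - j) (k.+1 + j) s' = e2 (k - j) (k + j) s.
        move=> j Hj.
        rewrite /s' (@e2_fcE _ _ _ _ _ _ (k.+1 - j).+2 (k.+1 + j).+2) //;
          try (rewrite /g2; mcase; lia); try lia.
        rewrite -(@e2_fcE _ (k + N).+2 _ (fun i => i.+1) (k.+1 - j).+1 (k.+1 + j).+1 _ _ Z) //; try lia; try okt.
        rewrite HZ2 /U1 (@e2_fcE _ _ _ _ _ _ (k + N + (k - j)) (k + N + (k + j))) //;
          try (rewrite /g1; mcase; lia); try lia.
        by rewrite -HT2 e2_sh //; lia.
      move=> j Hj.
      case: (leqP j k) => Hjk; first by rewrite Es // Hs2.
      have -> : j = k.+1 by lia.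
      rewrite subnn (@e2_fcE _ _ _ _ _ _ 0 (k.+1 + k.+1).+2) //;
        try (rewrite /g2; mcase; lia); try lia.
      rewrite -(@e2_pt3 _ _ Z 0 1 (k.+1 + k.+1).+2 0 2) //; try lia.
      rewrite (deg2a HvF HNF) e2_pt3 //= ?HZ1 //; try lia.
      rewrite -(@e2_fcE _ (k + N).+2 _ (fun i => i.+1) 0 (k.+1 + k.+1).+1 _ _ Z) //; try lia; try okt.
      rewrite HZ2 /U1 (@e2_fcE _ _ _ _ _ _ (k + N - (k.+1 + k)) (k + N + (k.+1 + k))) //;
        try (rewrite /g1; mcase; lia); try lia.
      by rewrite HT3 //; lia.
have [s [Hs1 Hs2]] := P N (leqnn N).
pose w := phi (N + N) s (mkh (N + N) (N + N) (fun i => i)).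
exists (fc N (fun i => i) w), w; split => //.
- rewrite -Hy -Hs1 (phi_nat_id Hphi) //; okt.
- move=> k Hk; change (fc 1 (pt2 (N - k) (N + k)) w = uX).
  rewrite -(phi_nat_id Hphi); first exact: Hs2.
  by apply: okf2; lia.
Qed.

Lemma U_X n (a a' x : X n) (w w' : X (n + n)) : Good vX a x w -> Good vX a' x w' -> a = a'.
Proof.
move=> [H1 H2 H3] [H1' H2' H3'].
have Eb : tau (n + n) w' = tau (n + n) w.
  apply: (TU HvB HNB HnuB).
  - by rewrite -!(smap_fc Htau) H2 H2'.
  - move=> k Hk; rewrite /e2 -!(smap_fc Htau).
    by move: (H3 k Hk) (H3' k Hk); rewrite /e2 => -> ->.
have [phi Hphi] := Htriv (n + n) (tau (n + n) w).
have [z Hz] : exists z, phi (n + n) z (mkh (n + n) (n + n) (fun i => i)) = w.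
  by apply: (phi_surj Hphi); rewrite -/(fc _ _ _) fc_id.
have [z' Hz'] : exists z, phi (n + n) z (mkh (n + n) (n + n) (fun i => i)) = w'.
  by apply: (phi_surj Hphi); rewrite -/(fc _ _ _) fc_id.
have Ez : z = z'.
  apply: (TU HvF HNF HnuF).
  - apply: (phi_uniq Hphi (f := mkh n (n + n) (fun i => n + i))).
    rewrite !(phi_nat_id Hphi); try okt.
    by rewrite Hz Hz' H2 H2'.
  - move=> k Hk; apply: (phi_uniq Hphi (f := mkh 1 (n + n) (pt2 (n - k) (n + k)))).
    change (phi 1 (fc 1 (pt2 (n - k) (n + k)) z) (mkh 1 (n + n) (pt2 (n - k) (n + k))) =
            phi 1 (fc 1 (pt2 (n - k) (n + k)) z') (mkh 1 (n + n) (pt2 (n - k) (n + k)))).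
    rewrite !(phi_nat_id Hphi) ?Hz ?Hz'; try (apply: okf2; lia).
    exact: (etrans (H3 k Hk) (esym (H3' k Hk))).
by rewrite -H1 -H1' -Hz -Hz' Ez.
Qed.

Lemma S1_X (a x : X 1) (w : X (1 + 1)) : Good vX a x w -> exists w', Good vX x a w'.
Proof.
move=> Hg.
have [R [R1 R2 R3']] := R3 HvB HNB HnuB (tau 1 x).
have [psi Hpsi] := Htriv 3 R.
have [chi Hchi] : exists y, psi 1 y (mkh 1 3 (pt2 1 2)) = x.
  by apply: (phi_surj Hpsi); rewrite -e2E R1.
have [c Hc] : exists y, psi 1 y (mkh 1 3 (pt2 0 2)) = uX.
  by apply: (phi_surj Hpsi); rewrite (tau_unit Htau vX HvB) -e2E R2.
have [d Hd] : exists y, psi 1 y (mkh 1 3 (pt2 1 3)) = uX.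
  by apply: (phi_surj Hpsi); rewrite (tau_unit Htau vX HvB) -e2E R3'.
have [RF [RF1 RF2 RF3]] := R3 HvF HNF HnuF chi.
have [Z1 [HZ1a HZ1b]] := @append _ _ _ _ Htau _ HvX _ HvB HNB _ _ _ Hpsi 1 3 d
  ltac:(lia) ltac:(lia) R3' Hd _ RF.
have [Z2 [HZ2a HZ2b]] := @prepend _ _ _ _ Htau _ HvX _ HvB HNB _ _ _ Hpsi 0 2 c
  ltac:(lia) ltac:(lia) R2 Hc _ Z1.
pose Q := fc 3 (pt4 0 2 3 5) Z2.
have Q12 : e2 1 2 Q = chi.
  rewrite /Q e2_pt4 //=.
  rewrite -(@e2_fcE _ 4 _ (fun i => i.+1) 1 2 _ _ Z2) // ?HZ2b; try okt.
  by rewrite -RF1 -HZ1b e2_id.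
have Q02 : e2 0 2 Q = c.
  rewrite /Q e2_pt4 //=.
  rewrite -(@e2_pt3 _ _ Z2 0 1 3 0 2) //.
  rewrite (deg2a HvF HNF); last first.
    rewrite e2_pt3 //=.
    rewrite -(@e2_fcE _ 4 _ (fun i => i.+1) 0 2 _ _ Z2) // ?HZ2b; try okt.
    by rewrite -RF2 -HZ1b e2_id.
  by rewrite e2_pt3 //= HZ2a.
have Q13 : e2 1 3 Q = d.
  rewrite /Q e2_pt4 //=.
  rewrite -(@e2_fcE _ 4 _ (fun i => i.+1) 1 4 _ _ Z2) // ?HZ2b; try okt.
  rewrite -(@e2_pt3 _ _ Z1 1 3 4 0 2) //.
  rewrite (deg2b HvF HNF); last first.
    by rewrite e2_pt3 //= -RF3 -HZ1b e2_id.
  by rewrite e2_pt3 //= HZ1a.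
pose om := psi 3 Q (mkh 3 3 (fun i => i)).
have Eom : forall p q, p <= q -> q <= 3 -> e2 p q om = psi 1 (e2 p q Q) (mkh 1 3 (pt2 p q)).
  move=> p q Hpq Hq.
  change (fc 1 (pt2 p q) om = psi 1 (fc 1 (pt2 p q) Q) (mkh 1 3 (pt2 p q))).
  by rewrite (phi_nat_id Hpsi) //; apply: okf2.
have om12 : e2 1 2 om = x by rewrite Eom // Q12.
have om02 : e2 0 2 om = uX by rewrite Eom // Q02.
have om13 : e2 1 3 om = uX by rewrite Eom // Q13.
have Ha0 : e2 0 1 om = a.
  apply: (@U_X 1 _ _ x (fc 2 (pt3 0 1 2) om) w) => //.
  apply: (Good1_intro HvX); rewrite e2_pt3 //=.
have E03a : e2 0 3 om = e2 0 1 om.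
  rewrite -(@e2_pt3 _ _ om 0 1 3 0 2) // (deg2a HvX NSX) ?e2_pt3 //=.
have E03b : e2 0 3 om = e2 2 3 om.
  rewrite -(@e2_pt3 _ _ om 0 2 3 0 2) // (deg2b HvX NSX) ?e2_pt3 //=.
exists (fc 2 (pt3 1 2 3) om).
apply: (Good1_intro HvX); rewrite e2_pt3 //=.
by rewrite -E03b E03a.
Qed.

End Main.

Unset Implicit Arguments.
Theorem theoremA (X B F : sSet) (tau : forall n, X n -> B n) :
  fibre_bundle F tau -> partial_group B -> partial_group F -> partial_group X.
Proof.
move=> [Htau Hsurj Htriv] [[vB HvB] HNB [nuB HnuB]] [[vF HvF] HNF [nuF HnuF]].
have [vX HvX] := reducedX Htriv HvB HvF.
have HNX : N_simplicial X := NSX Htau Htriv HNB HNF.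
split; [by exists vX | exact: HNX |].
have EX := E_X Htau Htriv HvB HNB HnuB HvF HNF HnuF HvX.
pose nuX n (x : X n) := proj1_sig (constructive_indefinite_description _ (EX n x)).
have HnuX : forall n (x : X n), exists w, Good vX (nuX n x) x w.
  by move=> n x; exact: (proj2_sig (constructive_indefinite_description _ (EX n x))).
have UX := U_X Htau Htriv HvB HNB HnuB HvF HNF HnuF (vX := vX).
have Hnat : is_smap_op nuX.
  move=> m n f x.
  have [okg Ef] := hom_mkh f.
  rewrite Ef (revh_mkh okg).
  move: okg; set g := (fun i => _) => okg.
  change (nuX m (fc m g x) = fc m (fun i => n - g (m - i)) (nuX n x)).
  have [w [H1 H2 H3]] := HnuX n x.
  have [w' Hw'] := HnuX m (fc m g x).
  pose G := fun i => if i <= m then n - g (m - i) else n + g (i - m).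
  have okG : okf (m + m) (n + n) G.
    case: (okg) => M1 M2; split.
    - move=> i j Hij Hj; rewrite /G.
      case: (leqP i m) => Hi; case: (leqP j m) => Hj2; try lia.
      + have := M1 (m - j) (m - i); have := okf_le okg (leq_subr i m); lia.
      + have := M1 (i - m) (j - m); lia.
    - rewrite /G addKn; case: ifP => _; lia.
  apply: (@UX m _ _ _ w' (fc (m + m) G w) Hw').
  split.
  - rewrite -H1 (@fc_fcE _ _ _ _ _ _ (fun i => n - g (m - i))) //; try okt.
    + rewrite (@fc_fcE _ _ _ _ _ _ (fun i => n - g (m - i))) //; try okt.
      exact: okf_rev.
    + by move=> i Hi; rewrite /G Hi.
  - rewrite -H2 (@fc_fcE _ _ _ _ _ _ (fun i => G (m + i))) //; try okt.
    rewrite (@fc_fcE _ _ _ _ _ _ (fun i => n + g i)) //; try okt.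
    case: (posnP m) => Hm; first by subst m; rewrite !(HvX (fc _ _ _)).
    have ok1 : okf m (n + n) (fun i => G (m + i)) by apply: (okf_comp _ okG); okt.
    have ok2 : okf m (n + n) (fun i => n + g i) by apply: (okf_comp okg); okt.
    have EG : forall i, G (m + i.+1) = n + g i.+1.
      move=> i; rewrite /G; have -> : (m + i.+1 <= m) = false by lia.
      by rewrite addKn.
    apply: NS_e2 => // i Hi; rewrite !e2_fc //.
    rewrite EG; case: i Hi => [|i] Hi; last by rewrite EG.
    have g01 : g 0 <= g 1 by apply: okg.1.
    have g1n : g 1 <= n by apply: okf_le okg _.
    rewrite /G addn0 leqnn subnn.
    rewrite -(@e2_pt3 _ _ w (n - g 0) (n + g 0) (n + g 1) 0 2); try lia.
    rewrite (deg2b HvX HNX); last first.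
      rewrite e2_pt3 /=; try lia. apply: H3; lia.
    by rewrite e2_pt3 //; lia.
  - move=> k Hk; rewrite e2_fc //; try lia.
    case: k Hk => [|k] Hk.
      by rewrite subn0 addn0 (e2_pp HvX) //; apply: (okf_le okG); lia.
    rewrite /G.
    have -> : (m - k.+1 <= m) = true by lia.
    have -> : (m + k.+1 <= m) = false by lia.
    have -> : m - (m - k.+1) = k.+1 by lia.
    have -> : m + k.+1 - m = k.+1 by lia.
    apply: H3; exact: okf_le okg Hk.
exists (fun n (x : X n) => nuX n x); split => //.
- have nat_e2 : forall n p q (y : X n), p <= q -> q <= n ->
      e2 p q (nuX n y) = nuX 1 (e2 (n - q) (n - p) y).
    move=> n p q y Hpq Hq.
    rewrite /e2 (smapop_fc Hnat); last by apply: okf2; lia.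
    apply: fc_ext; first by apply: okf2.
    by move=> [|[|]] //= _; lia.
  have L1 : forall e : X 1, nuX 1 (nuX 1 e) = e.
    move=> e; have [w Hw] := HnuX 1 e.
    have [w' Hw'] := S1_X Htau Htriv HvB HNB HnuB HvF HNF HnuF HvX Hw.
    have [w'' Hw''] := HnuX 1 (nuX 1 e).
    exact: (@UX 1 _ _ _ w'' w' Hw'' Hw').
  move=> n x; case: (posnP n) => Hn.
    by subst n; apply: etrans (HvX _) (esym (HvX _)).
  apply: NS_e2 => // i Hi.
  rewrite nat_e2 //; try lia.
  rewrite nat_e2 //; try lia.
  by rewrite L1; apply: e2_eq; lia.
- move=> n Hn x; have [w [H1 H2 H3]] := HnuX n x; exists w; split.
  + move=> i; rewrite !enum_opE /concat_edges; case: splitP => j Hj; rewrite enum_opE Hj.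
    * have := ltn_ord j => Hj2.
      by rewrite -H1 e2_id //; lia.
    * have := ltn_ord j => Hj2.
      by rewrite -H2 e2_sh ?addnS //; lia.
  + exists vX; split => //.
    by rewrite prod_opE; have := H3 n (leqnn n); rewrite subnn.
Qed.
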